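(* Let $S_X,S_Y$ be finite nonempty action sets and $\varphi:S_X\times S_Y\to\mathbb{R}$. The following are equivalent: (a) $\varphi\equiv0$ is enforceable; (b) $\Phi_X^+\neq\emptyset$ and $\Phi_X^-\neq\emptyset$; (c) $0\in J(\varphi)$, where $$J(\varphi)=\Big[\min_{\tau_X\in\Delta(S_X)}\max_{s_Y\in S_Y}\varphi(\tau_X,s_Y),\ \max_{\tau_X\in\Delta(S_X)}\min_{s_Y\in S_Y}\varphi(\tau_X,s_Y)\Big]$$ (interpreted as the empty set if the left endpoint exceeds the right endpoint).
   Context: Two players $X,Y$ play a repeated game with finite action sets $S_X,S_Y$; $\Delta(S)$ denotes the probability distributions on $S$; $\varphi(\tau_X,s_Y)=\mathbb{E}_{s_X\sim\tau_X}[\varphi(s_X,s_Y)]$. Histories: $\mathcal{H}=\bigcup_{T\ge0}(S_X\times S_Y)^T$; behavioral strategies are maps $\sigma:\mathcal{H}\to\Delta(S)$; players independently draw actions each round from their strategies evaluated at the history of realized action pairs, with $\mathbb{E}_{\sigma_X,\sigma_Y}$ the expectation over the resulting play. For $\lambda\in[0,1)$, $\sigma_X$ is $(\varphi,\lambda)$-autocratic if for every behavioral strategy $\sigma_Y$, $\mathbb{E}_{\sigma_X,\sigma_Y}[(1-\lambda)\sum_{t\ge0}\lambda^t\varphi(s_X^t,s_Y^t)]=0$; it is $(\varphi,1)$-autocratic if for every $\sigma_Y$ the limit $\lim_{T\to\infty}\frac1{T+1}\sum_{t=0}^T\mathbb{E}_{\sigma_X,\sigma_Y}[\varphi(s_X^t,s_Y^t)]$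 exists and equals $0$. $\varphi\equiv0$ is enforceable if a $(\varphi,\lambda)$-autocratic behavioral strategy exists for some $\lambda\in[0,1]$. $\Phi_X^+=\{\tau_X\in\Delta(S_X):\min_{s_Y}\varphi(\tau_X,s_Y)\ge0\}$, $\Phi_X^-=\{\tau_X\in\Delta(S_X):\max_{s_Y}\varphi(\tau_X,s_Y)\le0\}$. *)

(* Defs.v *)
From HB Require Import structures.
From mathcomp Require Import all_boot all_order all_algebra.
From mathcomp Require Import all_classical all_reals topology normedtype sequences.
Set Implicit Arguments. Unset Strict Implicit. Unset Printing Implicit Defensive.
Import Order.TTheory GRing.Theory Num.Theory.
Import numFieldNormedType.Exports.
Local Open Scope ring_scope.
Local Open Scope classical_set_scope.

Section Game.
Variables (R : realType) (SX SY : finType).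

Definition is_dist (S : finType) (p : {ffun S -> R}) : Prop :=
  (forall s, 0 <= p s) /\ \sum_(s : S) p s = 1.

(* histories: finite sequences of realized action pairs, chronological order *)
Definition history := seq (SX * SY).

Definition behavioral (S : finType) (sigma : history -> {ffun S -> R}) : Prop :=
  forall h, is_dist (sigma h).

Definition phi_mix (phi : SX -> SY -> R) (tau : {ffun SX -> R}) (sy : SY) : R :=
  \sum_(sx : SX) tau sx * phi sx sy.

Variables (sX : history -> {ffun SX -> R}) (sY : history -> {ffun SY -> R}).

(* probability of a history, given in reverse order (latest pair first) *)
Fixpoint prob_rev (r : history) : R :=
  match r with
  | [::] => 1
  | (a, b) :: r' => prob_rev r' * sX (rev r') a * sY (rev r') b
  end.

Definition prob_hist (h : history) : R := prob_rev (rev h).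

Definition stage_exp (phi : SX -> SY -> R) (t : nat) : R :=
  \sum_(h : t.-tuple (SX * SY))
     prob_hist h * \sum_(a : SX) \sum_(b : SY) sX h a * sY h b * phi a b.

End Game.

Definition autocratic (R : realType) (SX SY : finType) (phi : SX -> SY -> R)
  (lam : R) (sX : history SX SY -> {ffun SX -> R}) : Prop :=
  forall sY : history SX SY -> {ffun SY -> R}, behavioral sY ->
  if lam < 1 then
    (fun n => \sum_(0 <= t < n) (1 - lam) * lam ^+ t * stage_exp sX sY phi t)
      @ \oo --> (0 : R)
  else
    (fun T => (T.+1%:R)^-1 * \sum_(0 <= t < T.+1) stage_exp sX sY phi t)
      @ \oo --> (0 : R).

Definition enforceable (R : realType) (SX SY : finType) (phi : SX -> SY -> R) : Prop :=
  exists lam : R, 0 <= lam <= 1 /\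
  exists sX : history SX SY -> {ffun SX -> R}, behavioral sX /\ autocratic phi lam sX.

Definition PhiX_plus (R : realType) (SX SY : finType) (phi : SX -> SY -> R)
  : set {ffun SX -> R} :=
  [set tau | is_dist tau /\ forall sy, 0 <= phi_mix phi tau sy].

Definition PhiX_minus (R : realType) (SX SY : finType) (phi : SX -> SY -> R)
  : set {ffun SX -> R} :=
  [set tau | is_dist tau /\ forall sy, phi_mix phi tau sy <= 0].

Definition maxY (R : realType) (SX SY : finType) (phi : SX -> SY -> R)
  (tau : {ffun SX -> R}) : R := sup [set phi_mix phi tau sy | sy in [set: SY]].
Definition minY (R : realType) (SX SY : finType) (phi : SX -> SY -> R)
  (tau : {ffun SX -> R}) : R := inf [set phi_mix phi tau sy | sy in [set: SY]].

(* endpoints of J(phi): min_tau max_sY and max_tau min_sY (attained by compactness) *)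
Definition J_left (R : realType) (SX SY : finType) (phi : SX -> SY -> R) : R :=
  inf [set maxY phi tau | tau in [set tau | is_dist tau]].
Definition J_right (R : realType) (SX SY : finType) (phi : SX -> SY -> R) : R :=
  sup [set minY phi tau | tau in [set tau | is_dist tau]].

Definition J (R : realType) (SX SY : finType) (phi : SX -> SY -> R) : set R :=
  [set x | J_left phi <= x <= J_right phi].

(* Main.v *)
Require Import Defs.
From HB Require Import structures.
From mathcomp Require Import all_boot all_order all_algebra.
From mathcomp Require Import all_classical all_reals topology normedtype sequences.
From mathcomp Require Import matrix_normedtype derive.
From mathcomp Require Import ring lra.
Set Implicit Arguments. Unset Strict Implicit. Unset Printing Implicit Defensive.
Import Order.TTheory GRing.Theory Num.Theory.
Import numFieldNormedType.Exports.
Local Open Scope ring_scope.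
Local Open Scope classical_set_scope.
Section Tup.
Variables (R : realType) (T : finType).

Lemma sum_tupleS n (F : seq T -> R) :
  \sum_(t : n.+1.-tuple T) F t = \sum_(x : T) \sum_(t : n.-tuple T) F (x :: t).
Proof.
rewrite pair_big /=.
rewrite (reindex (fun p : T * n.-tuple T => [tuple of p.1 :: p.2])) //=.
exists (fun t : n.+1.-tuple T => (thead t, [tuple of behead t])).
  by move=> [x t] _ /=; rewrite theadE; congr pair; apply: val_inj.
by move=> t _; rewrite [RHS]tuple_eta.
Qed.

Lemma sum_tuple_rev n (F : seq T -> R) :
  \sum_(t : n.-tuple T) F t = \sum_(t : n.-tuple T) F (rev t).
Proof.
rewrite (reindex (fun t : n.-tuple T => [tuple of rev t])) //=.
by exists (fun t : n.-tuple T => [tuple of rev t]) => t _; apply: val_inj; rewrite /= revK.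
Qed.

Lemma sum_tupleSr n (F : seq T -> R) :
  \sum_(t : n.+1.-tuple T) F t = \sum_(x : T) \sum_(t : n.-tuple T) F (rcons t x).
Proof.
rewrite sum_tuple_rev (sum_tupleS n (fun s => F (rev s))); apply: eq_bigr => x _.
rewrite (sum_tuple_rev _ (fun s => F (rev (x :: s)))); apply: eq_bigr => t _.
by rewrite /= rev_cons revK.
Qed.
End Tup.
Section Wsec.
Variables (R : realType) (SX SY : finType).
Variables (sX : history SX SY -> {ffun SX -> R}) (sY : history SX SY -> {ffun SY -> R}).
Hypothesis hsX : behavioral sX.
Hypothesis hsY : behavioral sY.

Definition W n (f : history SX SY -> R) : R :=
  \sum_(h : n.-tuple (SX * SY)) prob_hist sX sY h * f h.

Lemma prob_hist_rcons h x :
  prob_hist sX sY (rcons h x) = prob_hist sX sY h * sX h x.1 * sY h x.2.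
Proof. by case: x => a b; rewrite /prob_hist rev_rcons /= revK. Qed.

Lemma prob_hist_ge0 h : 0 <= prob_hist sX sY h.
Proof.
rewrite /prob_hist; elim: (rev h) => [|[a b] r IH] /=; first exact: ler01.
by rewrite !mulr_ge0 //; [case: (hsX (rev r)) | case: (hsY (rev r))].
Qed.

Lemma W_tower n f :
  W n.+1 f = W n (fun h => \sum_(x : SX * SY) sX h x.1 * sY h x.2 * f (rcons h x)).
Proof.
rewrite /W (sum_tupleSr n (fun s => prob_hist sX sY s * f s)) exchange_big /=; apply: eq_bigr => h _.
rewrite mulr_sumr; apply: eq_bigr => x _.
by rewrite prob_hist_rcons !mulrA.
Qed.

Lemma pair_weight (h : history SX SY) : \sum_(x : SX * SY) sX h x.1 * sY h x.2 = 1.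
Proof.
rewrite -(pair_big xpredT xpredT (fun a b => sX h a * sY h b)) /=.
case: (hsX h) => _ <-; apply: eq_bigr => a _.
by rewrite -mulr_sumr; case: (hsY h) => _ ->; rewrite mulr1.
Qed.

Lemma W0 f : W 0 f = f [::].
Proof.
rewrite /W (big_pred1 [tuple]) /=; last by move=> t; apply/esym/eqP; exact: tuple0.
by rewrite /prob_hist /= mul1r.
Qed.

Lemma W_cst n c : W n (fun _ => c) = c.
Proof.
elim: n => [|n IH]; first by rewrite W0.
rewrite W_tower -[RHS]IH; congr W; apply: funext => h.
by rewrite -mulr_suml pair_weight mul1r.
Qed.

Lemma W_le n f g : (forall h, f h <= g h) -> W n f <= W n g.
Proof.
move=> fg; apply: ler_sum => h _; apply: ler_wpM2l => //; exact: prob_hist_ge0.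
Qed.

Lemma W_add n f g : W n (fun h => f h + g h) = W n f + W n g.
Proof. by rewrite /W -big_split /=; apply: eq_bigr => h _; rewrite mulrDr. Qed.

End Wsec.
Lemma le_sum1 (R : realType) (I : finType) (F : I -> R) i :
  (forall j, 0 <= F j) -> F i <= \sum_j F j.
Proof. by move=> h; rewrite (bigD1 i) //= lerDl sumr_ge0. Qed.

Lemma mix_pair (R : realType) (SX SY : finType) (phi : SX -> SY -> R)
  (p : {ffun SX -> R}) (q : {ffun SY -> R}) (c : R) :
  is_dist p -> is_dist q ->
  \sum_(x : SX * SY) p x.1 * q x.2 * (c + phi_mix phi p x.2)
  = c + \sum_a \sum_b p a * q b * phi a b.
Proof.
move=> [_ hp] [_ hq].
under eq_bigr => x _ do rewrite mulrDr.
rewrite big_split /=; congr (_ + _).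
  rewrite -mulr_suml -(pair_big xpredT xpredT (fun a b => p a * q b)) /=.
  rewrite -[RHS]mul1r; congr (_ * _); rewrite -[RHS]hp; apply: eq_bigr => a _.
  by rewrite -mulr_sumr hq mulr1.
rewrite -(pair_big xpredT xpredT (fun a b => p a * q b * phi_mix phi p b)) /=.
transitivity (\sum_b q b * phi_mix phi p b).
  rewrite exchange_big /=; apply: eq_bigr => b _.
  rewrite -!mulr_suml; rewrite hp mul1r; by [].
rewrite exchange_big /=; apply: eq_bigr => b _.
rewrite /phi_mix mulr_sumr; apply: eq_bigr => a _.
by rewrite [p a * q b]mulrC -mulrA.
Qed.

Section Strat.
Variables (R : realType) (SX SY : finType) (phi : SX -> SY -> R).
Variables (tp tm : {ffun SX -> R}).
Hypothesis htp : PhiX_plus phi tp.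
Hypothesis htm : PhiX_minus phi tm.

Definition tsel (e : R) := if e < 0 then tp else tm.

Fixpoint Erev (r : history SX SY) : R :=
  match r with
  | [::] => 0
  | (a, b) :: r' => Erev r' + phi_mix phi (tsel (Erev r')) b
  end.

Definition Eh (h : history SX SY) := Erev (rev h).
Definition sXs (h : history SX SY) := tsel (Eh h).

Lemma Eh_rcons h x : Eh (rcons h x) = Eh h + phi_mix phi (sXs h) x.2.
Proof. by case: x => a b; rewrite /Eh /sXs rev_rcons. Qed.

Lemma sXs_beh : behavioral sXs.
Proof. by move=> h; rewrite /sXs /tsel; case: ifP => _; [case: htp | case: htm]. Qed.

Definition Mb := \sum_b (`|phi_mix phi tp b| + `|phi_mix phi tm b|).

Lemma Erev_bound r : - Mb <= Erev r <= Mb.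
Proof.
have Mge0 : 0 <= Mb by apply: sumr_ge0 => b _; rewrite addr_ge0.
have MbS b : `|phi_mix phi tp b| + `|phi_mix phi tm b| <= Mb.
  rewrite /Mb; apply: (@le_sum1 _ _ (fun b => `|phi_mix phi tp b| + `|phi_mix phi tm b|)) => j.
  by rewrite addr_ge0.
elim: r => [|[a b] r IH] /=; first by rewrite oppr_le0 Mge0.
case/andP: IH => l u.
rewrite /tsel; case: ifP => e0.
  have d0 : 0 <= phi_mix phi tp b by case: htp => _; apply.
  have dM : phi_mix phi tp b <= Mb.
    apply: le_trans (ler_norm _) _; apply: le_trans (MbS b); by rewrite lerDl.
  apply/andP; split; first by rewrite (le_trans l) // lerDl.
  by rewrite -[Mb]add0r lerD // ltW.
have d0 : phi_mix phi tm b <= 0 by case: htm => _; apply.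
have dM : - Mb <= phi_mix phi tm b.
  rewrite lerNl; apply: le_trans (ler_norm (- _)) _; rewrite normrN.
  apply: le_trans (MbS b); by rewrite lerDr.
apply/andP; split; last by rewrite (le_trans _ u) // gerDl.
by rewrite -[- Mb]add0r lerD // leNgt e0.
Qed.

Lemma W_Eh (sY : history SX SY -> {ffun SY -> R}) : behavioral sY ->
  forall T, W sXs sY T Eh = \sum_(0 <= t < T) stage_exp sXs sY phi t.
Proof.
move=> hY; elim=> [|T IH].
  by rewrite big_geq // W0.
rewrite big_nat_recr //= -IH W_tower.
have -> : stage_exp sXs sY phi T =
  W sXs sY T (fun h => \sum_a \sum_b sXs h a * sY h b * phi a b) by [].
rewrite -W_add; congr W; apply: funext => h.
under eq_bigr => x _ do rewrite Eh_rcons.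
rewrite /sXs; exact: (mix_pair phi (Eh h) (sXs_beh h) (hY h)).
Qed.

Lemma sXs_auto : autocratic phi 1 sXs.
Proof.
move=> sY hY; rewrite ltxx.
have bnd T : `|(T.+1%:R)^-1 * \sum_(0 <= t < T.+1) stage_exp sXs sY phi t| <= harmonic T * Mb.
  rewrite -W_Eh // normrM /= ger0_norm ?invr_ge0 // ler_wpM2l ?invr_ge0 //.
  rewrite ler_norml; apply/andP; split.
    rewrite -{1}(W_cst sXs_beh hY T.+1 (- Mb)); apply: (W_le sXs_beh hY) => h /=.
    by case/andP: (Erev_bound (rev h)).
  rewrite -(W_cst sXs_beh hY T.+1 Mb); apply: (W_le sXs_beh hY) => h /=.
  by case/andP: (Erev_bound (rev h)).
have hM : (fun T => harmonic T *: Mb) @ \oo --> (0 : R).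
  by rewrite -(scale0r Mb); apply: cvgZr_tmp; exact: cvg_harmonic.
apply: (squeeze_cvgr (f:=fun T => - (harmonic T *: Mb)) (h:=fun T => harmonic T *: Mb)).
- apply: nearW => T; rewrite -ler_norml; exact: bnd.
- by rewrite -oppr0; apply: cvgN.
- exact: hM.
Qed.

End Strat.
Lemma cont_sum (R : realType) (T : topologicalType) (I : finType) (F : I -> T -> R) :
  (forall i, continuous (F i)) -> continuous (fun v => \sum_i F i v).
Proof.
move=> Fc; rewrite unlock /reducebig.
elim: (index_enum I) => [|i s IH] /=; first exact: cst_continuous.
move=> v; apply: (@continuousD _ _ _ (F i) (fun v => foldr _ _ _)); [exact: Fc | exact: IH].
Qed.

Section Compact.
Variables (R : realType) (SX SY : finType) (phi : SX -> SY -> R).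
Hypothesis hX : (0 < #|SX|)%N.
Hypothesis hY : (0 < #|SY|)%N.

Local Notation n := #|SX|.
Definition toF (v : 'rV[R]_n) : {ffun SX -> R} := [ffun x => v ord0 (enum_rank x)].
Definition ofF (t : {ffun SX -> R}) : 'rV[R]_n := \row_i t (enum_val i).

Lemma toFK t : toF (ofF t) = t.
Proof. by apply/ffunP => x; rewrite !ffunE mxE enum_rankK. Qed.

Definition Gf (t : {ffun SX -> R}) := \sum_y (phi_mix phi t y - `|phi_mix phi t y|).

Definition Simp : set 'rV[R]_n :=
  (\bigcap_(x in [set: SX]) [set v : 'rV[R]_n | 0 <= v ord0 (enum_rank x)])
  `&` [set v | \sum_x v ord0 (enum_rank x) = 1].

Lemma Simp_dist v : Simp v -> is_dist (toF v).
Proof.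
move=> [h1 h2]; split; first by move=> x; rewrite ffunE; apply: h1.
by rewrite -[RHS]h2; apply: eq_bigr => x _; rewrite ffunE.
Qed.

Lemma dist_Simp t : is_dist t -> Simp (ofF t).
Proof.
move=> [h1 h2]; split; first by move=> x _ /=; rewrite mxE enum_rankK.
by rewrite /= -[RHS]h2; apply: eq_bigr => x _; rewrite mxE enum_rankK.
Qed.

Lemma Simp_closed : closed Simp.
Proof.
apply: closedI.
  apply: closed_bigI => x _.
  apply: (@preimage_closed _ _ (fun v : 'rV[R]_n => v ord0 (enum_rank x)) [set r : R | 0 <= r]).
    by move=> v _; apply: coord_continuous.
  exact: closed_ge.
apply: (@preimage_closed _ _ (fun v : 'rV[R]_n => \sum_x v ord0 (enum_rank x)) [set r : R | r = 1]).
  have S := @cont_sum R _ SX (fun x (v : 'rV[R]_n) => v ord0 (enum_rank x))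
    (fun x => @coord_continuous _ _ _ _ _).
  by move=> v _; apply: S.
exact: closed_eq.
Qed.

Lemma Simp_compact : compact Simp.
Proof.
apply: (subclosed_compact Simp_closed (@rV_compact _ n (fun _ => `[(0:R), 1]%classic) _)).
  by move=> _; apply: segment_compact.
move=> v [h1 h2] i /=; rewrite in_itv /=.
have := h1 (enum_val i) I; rewrite enum_valK => ->.
rewrite -h2 -{1}(enum_valK i).
by apply: (@le_sum1 _ _ (fun x => v ord0 (enum_rank x))) => x; apply: h1.
Qed.

Lemma Gf_cont : continuous (fun v => Gf (toF v)).
Proof.
have E : (fun v => Gf (toF v)) = (fun v : 'rV[R]_n => \sum_y
    ((\sum_x v ord0 (enum_rank x) * phi x y) - `|\sum_x v ord0 (enum_rank x) * phi x y|)).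
  by apply: funext => v; apply: eq_bigr => y _; rewrite /phi_mix;
     under eq_bigr => x _ do rewrite ffunE.
rewrite E; apply: (@cont_sum R _ SY (fun y v => _ - _)) => y.
have L : continuous (fun v : 'rV[R]_n => \sum_x v ord0 (enum_rank x) * phi x y).
  apply: (@cont_sum R _ SX (fun x (v : 'rV[R]_n) => v ord0 (enum_rank x) * phi x y)) => x v.
  apply: (continuousM (s:=fun v : 'rV[R]_n => v ord0 (enum_rank x)) (t:=fun=> phi x y)).
    exact: coord_continuous.
  exact: cst_continuous.
move=> v; apply: (continuousB (f:=fun v : 'rV[R]_n => \sum_x v ord0 (enum_rank x) * phi x y)
  (g:=fun v : 'rV[R]_n => `|\sum_x v ord0 (enum_rank x) * phi x y|)); first exact: L.
apply: (continuous_comp (f:=fun v : 'rV[R]_n => \sum_x v ord0 (enum_rank x) * phi x y) (g:=@Num.Def.normr R R)); first exact: L.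
exact: norm_continuous.
Qed.

Definition unif : {ffun SX -> R} := [ffun _ => (#|SX|%:R)^-1].

Lemma unif_dist : is_dist unif.
Proof.
split; first by move=> x; rewrite ffunE invr_ge0.
under eq_bigr => x _ do rewrite ffunE.
rewrite sumr_const (_ : #|xpredT| = #|SX|) // -[X in X = 1]mulr_natr.
by rewrite mulVf // pnatr_eq0 -lt0n.
Qed.

Lemma Gf_le0 t : Gf t <= 0.
Proof. by apply: sumr_le0 => y _; rewrite subr_le0 ler_norm. Qed.

Lemma Uplus : (forall t, is_dist t -> exists y, phi_mix phi t y < 0) ->
  exists2 d : R, 0 < d & forall t, is_dist t -> exists y, phi_mix phi t y <= - d.
Proof.
move=> H.
have [c cS cmax] := @compact_EVT_max _ R (fun v => Gf (toF v)) Simp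
  (ex_intro _ _ (dist_Simp unif_dist)) Simp_compact (continuous_subspaceT (@Gf_cont)).
have cS' : Simp c by rewrite inE in cS.
set C := Gf (toF c).
have C0 : C < 0.
  have [y hy] := H _ (Simp_dist cS').
  rewrite /C /Gf (bigD1 y) //=.
  apply: (@le_lt_trans _ _ (phi_mix phi (toF c) y - `|phi_mix phi (toF c) y|)).
    by rewrite gerDl; apply: sumr_le0 => z _; rewrite subr_le0 ler_norm.
  by rewrite subr_lt0 (lt_le_trans hy).
have k0 : 0 < (#|SY|%:R : R) by rewrite ltr0n.
exists (- C / (4 * #|SY|%:R)).
  by rewrite divr_gt0 ?oppr_gt0 // mulr_gt0.
move=> t ht.
case: (boolP [exists y, phi_mix phi t y <= - (- C / (4 * #|SY|%:R))]) => [/existsP[y hy]|/existsPn hn].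
  by exists y.
exfalso.
have Gt : Gf t <= C.
  rewrite -(toFK t); apply: cmax; rewrite inE; exact: dist_Simp.
set d := - C / (4 * #|SY|%:R) in hn *.
have hd : forall y, - (2 * d) <= phi_mix phi t y - `|phi_mix phi t y|.
  move=> y; have := hn y; rewrite -ltNge => hy.
  have d0 : 0 < d by rewrite divr_gt0 ?oppr_gt0 // mulr_gt0.
  case: (leP 0 (phi_mix phi t y)) => a0.
    by rewrite ger0_norm // subrr oppr_le0 mulr_ge0 // ltW.
  rewrite ltr0_norm //; lra.
have : \sum_(y : SY) (- (2 * d)) <= Gf t by apply: ler_sum => y _; apply: hd.
rewrite sumr_const -mulr_natr => hs.
have : - (2 * d) * #|SY|%:R = C / 2.
  rewrite /d; field; rewrite gt_eqF //.
lra.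
Qed.

End Compact.
Section Enf.
Variables (R : realType) (SX SY : finType) (phi : SX -> SY -> R).
Hypothesis hX : (0 < #|SX|)%N.
Hypothesis hY : (0 < #|SY|)%N.

Lemma no_plus : ~ (PhiX_plus phi !=set0) ->
  forall t, is_dist t -> exists y, phi_mix phi t y < 0.
Proof.
move=> hn t ht.
case: (boolP [exists y, phi_mix phi t y < 0]) => [/existsP[y hy]|/existsPn hy].
  by exists y.
exfalso; apply: hn; exists t; split => // y; rewrite leNgt; exact: hy.
Qed.

Lemma enf_plus : enforceable phi -> PhiX_plus phi !=set0.
Proof.
move=> [lam [/andP[lam0 lam1] [sX [hsX hauto]]]].
apply: contrapT => hn.
have [d d0 hd] := Uplus hX hY (no_plus hn).
have [y0 _] := card_gt0P hY.
pose yh (h : history SX SY) := odflt y0 [pick y | phi_mix phi (sX h) y <= - d].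
have yhP h : phi_mix phi (sX h) (yh h) <= - d.
  rewrite /yh; case: pickP => [y -> //|/= hno].
  have [y hy] := hd _ (hsX h); by move: (hno y); rewrite hy.
pose sY (h : history SX SY) : {ffun SY -> R} := [ffun b => (b == yh h)%:R].
have hsY : behavioral sY.
  move=> h; split; first by move=> b; rewrite ffunE ler0n.
  rewrite (bigD1 (yh h)) //= ffunE eqxx big1 ?addr0 // => b /negbTE hb.
  by rewrite ffunE hb.
have He t : stage_exp sX sY phi t <= - d.
  have -> : stage_exp sX sY phi t =
    W sX sY t (fun h => \sum_a \sum_b sX h a * sY h b * phi a b) by [].
  rewrite -(W_cst hsX hsY t (- d)); apply: (W_le hsX hsY) => h /=.
  suff -> : \sum_a \sum_b sX h a * sY h b * phi a b = phi_mix phi (sX h) (yh h) by [].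
  rewrite /phi_mix; apply: eq_bigr => a _.
  rewrite (bigD1 (yh h)) //= ffunE eqxx mulr1 big1 ?addr0 // => b /negbTE hb.
  by rewrite ffunE hb mulr0 mul0r.
have := hauto sY hsY; case: ifP => hl.
  have e0 : 0 < (1 - lam) * d by rewrite mulr_gt0 // subr_gt0.
  move/cvgrPdist_lt => /(_ _ e0) [N _ HN].
  have := HN N.+1 (leqnSn N); rewrite /= sub0r normrN big_nat_recl //= expr0 mulr1.
  have S1 : \sum_(0 <= i < N) (1 - lam) * lam ^+ i.+1 * stage_exp sX sY phi i.+1 <= 0.
    apply: sumr_le0 => i _; apply: mulr_ge0_le0; first by rewrite mulr_ge0 ?exprn_ge0 // subr_ge0 ltW.
    by apply: le_trans (He _) _; rewrite oppr_le0 ltW.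
  have S0 : (1 - lam) * stage_exp sX sY phi 0 <= (1 - lam) * - d.
    by rewrite ler_wpM2l // ?subr_ge0 ?ltW.
  rewrite mulrN in S0.
  move=> H; have := ler_norm (- ((1 - lam) * stage_exp sX sY phi 0 +
     \sum_(0 <= i < N) (1 - lam) * lam ^+ i.+1 * stage_exp sX sY phi i.+1)).
  rewrite normrN; move: H S0 S1.
  set X := (1 - lam) * stage_exp sX sY phi 0; set Z := \sum_(0 <= i < N) _.
  move: ((1 - lam) * d) => D; lra.
move/cvgrPdist_lt => /(_ _ d0) [N _ HN].
have := HN N (leqnn N); rewrite /= sub0r normrN.
have S : \sum_(0 <= t < N.+1) stage_exp sX sY phi t <= \sum_(0 <= t < N.+1) (- d).
  by apply: ler_sum => t _; apply: He.
rewrite sumr_const_nat subn0 in S.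
have : N.+1%:R^-1 * \sum_(0 <= t < N.+1) stage_exp sX sY phi t <= - d.
  rewrite -mulr_natr in S.
  rewrite ler_pdivrMl ?ltr0n // mulrC; by [].
move=> H1 H2; have := ler_norm (- (N.+1%:R^-1 * \sum_(0 <= t < N.+1) stage_exp sX sY phi t)).
rewrite normrN; clear S; move: H1 H2.
set X := N.+1%:R^-1 * _; move: (`|X|) => Y; lra.
Qed.
End Enf.
Section Neg.
Variables (R : realType) (SX SY : finType) (phi : SX -> SY -> R).
Hypothesis hX : (0 < #|SX|)%N.
Hypothesis hY : (0 < #|SY|)%N.

Definition nphi := fun a b => - phi a b.

Lemma phi_mixN t y : phi_mix nphi t y = - phi_mix phi t y.
Proof. by rewrite /phi_mix -sumrN; apply: eq_bigr => x _; rewrite /nphi mulrN. Qed.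

Lemma minus_plus : PhiX_minus phi !=set0 <-> PhiX_plus nphi !=set0.
Proof.
split=> -[t [ht H]]; exists t; split => // y.
  by rewrite phi_mixN oppr_ge0.
by rewrite -oppr_ge0 -phi_mixN.
Qed.

Lemma stage_expN sX sY t : stage_exp sX sY nphi t = - stage_exp sX sY phi t.
Proof.
rewrite /stage_exp -sumrN; apply: eq_bigr => h _; rewrite -mulrN; congr (_ * _).
rewrite -sumrN; apply: eq_bigr => a _; rewrite -sumrN; apply: eq_bigr => b _.
by rewrite /nphi mulrN.
Qed.

Lemma enf_neg : enforceable phi -> enforceable nphi.
Proof.
move=> [lam [hl [sX [hsX hauto]]]]; exists lam; split => //; exists sX; split => //.
move=> sY hsY; have := hauto sY hsY; case: ifP => _ H.
  have -> : (fun n => \sum_(0 <= t < n) (1 - lam) * lam ^+ t * stage_exp sX sY nphi t) =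
     (fun n => - \sum_(0 <= t < n) (1 - lam) * lam ^+ t * stage_exp sX sY phi t).
    apply: funext => n; rewrite -sumrN; apply: eq_bigr => t _; by rewrite stage_expN mulrN.
  by move/cvgN: H; rewrite oppr0.
have -> : (fun T => T.+1%:R^-1 * \sum_(0 <= t < T.+1) stage_exp sX sY nphi t) =
   (fun T => - (T.+1%:R^-1 * \sum_(0 <= t < T.+1) stage_exp sX sY phi t)).
  apply: funext => n; rewrite -mulrN -sumrN; congr (_ * _).
  by apply: eq_bigr => t _; rewrite stage_expN.
by move/cvgN: H; rewrite oppr0.
Qed.

Lemma minYN t : minY nphi t = - maxY phi t.
Proof.
rewrite /minY /maxY /inf; congr (- sup _); apply/seteqP; split => x /=.
  by move=> [_ [sy _ <-] <-]; exists sy => //; rewrite phi_mixN opprK.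
move=> [sy _ <-]; exists (phi_mix nphi t sy); first by exists sy.
by rewrite phi_mixN opprK.
Qed.

Lemma J_leftN : J_left phi = - J_right nphi.
Proof.
rewrite /J_left /J_right /inf; congr (- sup _); apply/seteqP; split => x /=.
  by move=> [_ [t ht <-] <-]; exists t => //; rewrite minYN.
move=> [t ht <-]; exists (maxY phi t); first by exists t.
by rewrite minYN.
Qed.

End Neg.

Section Jsec.
Variables (R : realType) (SX SY : finType) (phi : SX -> SY -> R).
Hypothesis hX : (0 < #|SX|)%N.
Hypothesis hY : (0 < #|SY|)%N.

Definition Bd := \sum_x \sum_y `|phi x y|.

Lemma mix_bound t y : is_dist t -> `|phi_mix phi t y| <= Bd.
Proof.
move=> [h0 h1].
apply: le_trans (ler_norm_sum _ _ _) _.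
apply: (@le_trans _ _ (\sum_x `|phi x y|)).
  apply: ler_sum => x _; rewrite normrM ger0_norm // ler_piMl //.
  by rewrite -h1; apply: (@le_sum1 _ _ (fun x => t x)).
apply: ler_sum => x _.
by apply: (@le_sum1 _ _ (fun y => `|phi x y|)).
Qed.

Lemma minY_le t y : minY phi t <= phi_mix phi t y.
Proof.
apply: ge_inf; last by exists y.
exists (- \sum_y `|phi_mix phi t y|) => _ [z _ <-].
rewrite lerNl; apply: le_trans (ler_norm (- _)) _; rewrite normrN.
by apply: (@le_sum1 _ _ (fun y => `|phi_mix phi t y|)).
Qed.

Lemma minY_ge t c : (forall y, c <= phi_mix phi t y) -> c <= minY phi t.
Proof.
move=> H; have [y0 _] := card_gt0P hY.
apply: lb_le_inf; first by exists (phi_mix phi t y0), y0.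
by move=> _ [z _ <-].
Qed.

Lemma plus_iff : PhiX_plus phi !=set0 <-> 0 <= J_right phi.
Proof.
have [y0 _] := card_gt0P hY.
split.
  move=> [t [ht H]].
  apply: le_trans (minY_ge H) _.
  apply: ub_le_sup; last by exists t.
  exists Bd => _ [s hs <-].
  apply: le_trans (minY_le s y0) _; apply: le_trans (ler_norm _) _.
  exact: mix_bound.
move=> H; apply: contrapT => hn.
have [d d0 hd] := Uplus hX hY (no_plus hn).
have : J_right phi <= - d.
  apply: ge_sup; first by exists (minY phi (unif R SX)), (unif R SX) => //; exact: unif_dist.
  move=> _ [t ht <-]; have [y hy] := hd t ht.
  exact: le_trans (minY_le t y) hy.
move=> H2; have := le_trans H H2; rewrite oppr_ge0 leNgt d0 //.
Qed.

End Jsec.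

Unset Implicit Arguments.
Theorem corollary3 (R : realType) (SX SY : finType)
  (hX : (0 < #|SX|)%N) (hY : (0 < #|SY|)%N) (phi : SX -> SY -> R) :
  (enforceable phi <-> (PhiX_plus phi !=set0 /\ PhiX_minus phi !=set0)) /\
  ((PhiX_plus phi !=set0 /\ PhiX_minus phi !=set0) <-> J phi 0).
Proof.
split.
  split.
    move=> He; split; first exact: enf_plus hX hY He.
    by apply/minus_plus; apply: enf_plus hX hY (enf_neg He).
  move=> [[tp htp] [tm htm]].
  exists 1; split; first by rewrite ler01 lexx.
  exists (sXs phi tp tm); split; first exact: sXs_beh.
  exact: sXs_auto.
rewrite /J /= J_leftN oppr_le0.
have P1 := plus_iff phi hX hY.
have P2 := plus_iff (nphi phi) hX hY.
have M := minus_plus phi.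
split.
  by move=> [/P1 -> /M/P2 ->].
by move=> /andP[h1 h2]; split; [apply/P1 | apply/M/P2].
Qed.
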